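(* Let $n\ge 0$ and let $F\colon X\to Y$ be a multivalued mapping which is lower $n$-continuous. Then $F$ is lower polyhedrally $n$-continuous.
   Context: A multivalued mapping $F\colon X\to Y$ assigns to each $x\in X$ a subset $F(x)\subset Y$. $F$ is lower $n$-continuous if for any $x\in X$, $y\in F(x)$ and any neighborhood $V$ of $y$ in $Y$ there exist neighborhoods $W$ of $y$ in $Y$ and $U$ of $x$ in $X$ such that for every $x'\in U$ and every $k$ with $-1\le k\le n-1$, every continuous map $S^k\to W\cap F(x')$ is homotopic to a constant map in $V\cap F(x')$ (for $k=-1$, with $S^{-1}=\emptyset$, this means $V\cap F(x')\neq\emptyset$). A pair of spaces $V'\subset U'$ is polyhedrally $n$-connected if for every finite polyhedron $P$ of dimension at most $n$ and every closed subpolyhedron $A\subset P$, every continuous map $A\to V'$ extends to a continuous map $P\to U'$. $F$ is lower polyhedrally $n$-continuous if for any $x\in X$, $y\in F(x)$ and any neighborhood $V$ of $y$ in $Y$ there exist neighborhoods $W$ of $y$ in $Y$ and $U$ of $x$ in $X$ such that the pair $W\cap F(x')\subset V\cap F(x')$ is polyhedrally $n$-connected for every $x'\in U$. *)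

(* Defs.v *)
From HB Require Import structures.
From mathcomp Require Import all_boot all_order all_algebra.
From mathcomp Require Import all_classical all_reals all_analysis.
From mathcomp Require Import Rstruct Rstruct_topology.
Unset Strict Implicit. Unset Printing Implicit Defensive.
Import Order.TTheory GRing.Theory Num.Theory.
Local Open Scope classical_set_scope.
Local Open Scope ring_scope.

Notation RR := Rdefinitions.R.

Definition unit_sphere (k : nat) : set 'rV[RR]_k.+1 :=
  [set v | \sum_(i < k.+1) (v ord0 i) ^+ 2 = 1].

Definition unit_interval : set RR := [set t | 0 <= t <= 1].

(* A map f : S^k -> Y (given on the ambient space, only its restriction to S^k
   matters) is homotopic, inside S, to a constant map. *)
Definition nullhomotopic_in {Y : topologicalType} (k : nat) (S : set Y)
    (f : 'rV[RR]_k.+1 -> Y) : Prop :=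
  exists (H : RR * 'rV[RR]_k.+1 -> Y) (c : Y),
    {within (unit_interval `*` (unit_sphere k)), continuous H} /\
    H @` ((unit_interval `*` (unit_sphere k))) `<=` S /\
    (forall v, unit_sphere k v -> H (0, v) = f v /\ H (1, v) = c).

(* Lower n-continuity of a multivalued mapping F : X -> 2^Y.  The case
   k = -1 (S^{-1} = empty) is the nonemptiness of V \cap F(x'); the cases
   0 <= k <= n-1 are the spheres S^k. *)
Definition lower_n_continuous {X Y : topologicalType} (n : nat)
    (F : X -> set Y) : Prop :=
  forall (x : X) (y : Y), F x y ->
  forall V : set Y, nbhs y V ->
  exists (W : set Y) (U : set X), nbhs y W /\ nbhs x U /\
    forall x', U x' ->
      (V `&` F x' !=set0) /\
      (forall k : nat, (k < n)%N ->
         forall f : 'rV[RR]_k.+1 -> Y,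
           {within unit_sphere k, continuous f} ->
           f @` unit_sphere k `<=` W `&` F x' ->
           nullhomotopic_in k (V `&` F x') f).

Definition simplicial_complex {m : nat} (K : {set {set 'I_m}}) : Prop :=
  forall s t : {set 'I_m}, s \in K -> t \subset s -> t \in K.

Definition complex_dim_le {m : nat} (n : nat) (K : {set {set 'I_m}}) : Prop :=
  forall s, s \in K -> (#|s| <= n.+1)%N.

(* Geometric realization |K| in R^m (standard realization: barycentric
   coordinates whose support is a face of K). *)
Definition realization {m : nat} (K : {set {set 'I_m}}) : set 'rV[RR]_m :=
  [set x : 'rV[RR]_m | (forall i, 0 <= x ord0 i) /\ \sum_(i < m) x ord0 i = 1 /\
           [set i : 'I_m | x ord0 i != 0]%SET \in K].

Definition polyhedrally_n_connected {Y : topologicalType} (n : nat)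
    (V' U' : set Y) : Prop :=
  forall (m : nat) (K L : {set {set 'I_m}}),
    simplicial_complex K -> complex_dim_le n K ->
    simplicial_complex L -> L \subset K ->
    forall g : 'rV[RR]_m -> Y,
      {within realization L, continuous g} ->
      g @` realization L `<=` V' ->
      exists h : 'rV[RR]_m -> Y,
        {within realization K, continuous h} /\
        h @` realization K `<=` U' /\
        (forall a, realization L a -> h a = g a).

Definition lower_polyhedrally_n_continuous {X Y : topologicalType} (n : nat)
    (F : X -> set Y) : Prop :=
  forall (x : X) (y : Y), F x y ->
  forall V : set Y, nbhs y V ->
  exists (W : set Y) (U : set X), nbhs y W /\ nbhs x U /\
    forall x', U x' ->
      polyhedrally_n_connected n (W `&` F x') (V `&` F x').

(* Main.v *)
Require Import Defs.
From HB Require Import structures.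
From mathcomp Require Import all_boot all_order all_algebra.
From mathcomp Require Import all_classical all_reals all_analysis.
From mathcomp Require Import Rstruct Rstruct_topology.
From mathcomp Require Import ring lra.
Import Order.TTheory GRing.Theory Num.Theory.
Local Open Scope classical_set_scope.
Local Open Scope ring_scope.

Lemma within_comp (T U Z : topologicalType) (A : set T) (B : set U)
  (f : T -> U) (g : U -> Z) :
  {within A, continuous f} -> (forall a, A a -> B (f a)) ->
  {within B, continuous g} -> {within A, continuous (g \o f)}.
Proof.
move=> cf fAB cg; apply/subspace_continuousP => x Ax W /= Wn.
have := proj1 (subspace_continuousP B g) cg (f x) (fAB x Ax) W Wn.
move=> /= h1.
have := proj1 (subspace_continuousP A f) cf x Ax _ h1.
rewrite /= /within /= !nbhs_simpl /=.
apply: filterS => a /= H Aa.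
exact: (H Aa (fAB a Aa)).
Qed.

Lemma within_eq (T U : topologicalType) (A : set T) (f g : T -> U) :
  (forall a, A a -> f a = g a) ->
  {within A, continuous f} -> {within A, continuous g}.
Proof.
move=> fg; apply: subspace_eq_continuous => a /[1!inE] Aa; exact: fg.
Qed.

Lemma closed_preimage (T U : topologicalType) (f : T -> U) (C : set U) :
  continuous f -> closed C -> closed (f @^-1` C).
Proof. by move=> cf cC; apply: (proj1 (continuous_closedP f) cf). Qed.
Arguments within_comp {T U Z A B f g}.
Arguments within_eq {T U A f g}.
Arguments closed_preimage {T U f C}.

Lemma sum_cont_at (T : topologicalType) (V : normedModType RR) (I : Type)
  (r : seq I) (P : pred I) (F : I -> T -> V) (x : T) :
  (forall i, P i -> {for x, continuous (F i)}) ->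
  {for x, continuous (fun a => \sum_(i <- r | P i) F i a)}.
Proof.
move=> cF; elim: r => [|i r IH].
  rewrite (_ : (fun a => _) = (fun=> 0)); last by apply/funext => a; rewrite big_nil.
  exact: cst_continuous.
case Pi: (P i).
  rewrite (_ : (fun a => _) = (F i + (fun a => \sum_(j <- r | P j) F j a))); last first.
    by apply/funext => a; rewrite big_cons Pi.
  by apply: continuousD => //; apply: cF.
rewrite (_ : (fun a => _) = (fun a => \sum_(j <- r | P j) F j a)) //.
by apply/funext => a; rewrite big_cons Pi.
Qed.

Lemma max_cont_at (T : topologicalType) (I : Type)
  (r : seq I) (F : I -> T -> RR) (x : T) :
  (forall i, {for x, continuous (F i)}) ->
  {for x, continuous (fun a => \big[Num.max/0]_(i <- r) F i a)}.
Proof.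
move=> cF; elim: r => [|i r IH].
  rewrite (_ : (fun a => _) = (fun=> 0)); last by apply/funext => a; rewrite big_nil.
  exact: cst_continuous.
rewrite (_ : (fun a => _) = (F i \max (fun a => \big[Num.max/0]_(j <- r) F j a))); last first.
  by apply/funext => a; rewrite big_cons.
exact: continuous_max.
Qed.

Lemma row_cont_at (T : topologicalType) (n : nat) (F : T -> 'I_n -> RR) (x : T) :
  (forall j, {for x, continuous (fun a => F a j)}) ->
  {for x, continuous (fun a => (\row_j F a j : 'rV[RR]_n))}.
Proof.
move=> cF.
rewrite (_ : (fun a => _) = (fun a => \sum_(j < n) F a j *: (delta_mx 0 j : 'rV[RR]_n))); last first.
  apply/funext => a; apply/rowP => j; rewrite mxE summxE (bigD1 j) //= big1.
    by rewrite !mxE !eqxx mulr1 addr0.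
  by move=> i ij; rewrite !mxE eq_sym (negbTE ij) andbF mulr0.
apply: sum_cont_at => j _; exact: continuousZr_tmp.
Qed.

Set Implicit Arguments.

Definition uext {k : nat} (v : 'rV[RR]_k.+1) (i : 'I_k.+2) : RR :=
  if (i < k.+1)%N then v ord0 (inord i) else - \sum_(j < k.+1) v ord0 j.

Definition mu {k : nat} (v : 'rV[RR]_k.+1) : RR :=
  \big[Num.max/0]_(i < k.+2) (- uext v i).

Lemma uext_widen k (v : 'rV[RR]_k.+1) (j : 'I_k.+1) :
  uext v (widen_ord (leqnSn _) j) = v ord0 j.
Proof. by rewrite /uext /= ltn_ord; congr (v _ _); apply: val_inj; rewrite /= inordK. Qed.

Lemma uext_max k (v : 'rV[RR]_k.+1) :
  uext v ord_max = - \sum_(j < k.+1) v ord0 j.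
Proof. by rewrite /uext /= ltnn. Qed.

Lemma uext_sum k (v : 'rV[RR]_k.+1) : \sum_(i < k.+2) uext v i = 0.
Proof.
rewrite big_ord_recr /= uext_max.
under eq_bigr do rewrite uext_widen.
by rewrite subrr.
Qed.

Lemma uextZ k (c : RR) (v : 'rV[RR]_k.+1) i : uext (c *: v) i = c * uext v i.
Proof.
rewrite /uext; case: ifP => _; first by rewrite mxE.
rewrite mulrN; congr (- _); rewrite mulr_sumr; apply: eq_bigr => j _.
by rewrite mxE.
Qed.

Lemma mu_ge k (v : 'rV[RR]_k.+1) i : - uext v i <= mu v.
Proof. by rewrite /mu (bigD1 i) //= le_max lexx. Qed.

Lemma mu_ge0 k (v : 'rV[RR]_k.+1) : 0 <= mu v.
Proof.
rewrite /mu; elim/big_rec: _ => //= i x _ hx.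
by rewrite le_max hx orbT.
Qed.

Lemma mu_cases k (v : 'rV[RR]_k.+1) : mu v = 0 \/ exists i, mu v = - uext v i.
Proof.
rewrite /mu; elim/big_ind: _ => //=; [by left| |by move=> i _; right; exists i].
move=> x y hx hy; rewrite /Num.max; case: ifP => //.
Qed.

Lemma muZ k (c : RR) (v : 'rV[RR]_k.+1) : 0 <= c -> mu (c *: v) = c * mu v.
Proof.
move=> c0; rewrite /mu (big_morph (fun x => c * x) (id1 := 0) (op1 := Num.max)).
- by apply: eq_bigr => i _; rewrite uextZ mulrN.
- by move=> x y; rewrite maxr_pMr.
- by rewrite mulr0.
Qed.

Lemma mu_pos k (v : 'rV[RR]_k.+1) : v != 0 -> 0 < mu v.
Proof.
move=> v0.
case: (pselect (exists i, uext v i < 0)) => [[i hi]|no].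
  by have h := mu_ge v i; rewrite -oppr_gt0 in hi; exact: (lt_le_trans hi h).
have h0 : forall i, 0 <= uext v i.
  by move=> i; rewrite leNgt; apply/negP => hi; apply: no; exists i.
have hz := psumr_eq0P (P := predT) (fun i _ => h0 i) (uext_sum v).
exfalso; move/negP: v0; apply; apply/eqP/rowP => j.
by rewrite mxE -uext_widen hz.
Qed.

Definition supp {m : nat} (a : 'rV[RR]_m) : {set 'I_m} := [set i | a ord0 i != 0]%SET.
Definition simplex_set {m : nat} (s : {set 'I_m}) : set 'rV[RR]_m :=
  [set a : 'rV[RR]_m | (forall i, 0 <= a ord0 i) /\ \sum_(i < m) a ord0 i = 1 /\ supp a \subset s].
Definition bdry {m : nat} (s : {set 'I_m}) : set 'rV[RR]_m :=
  [set a : 'rV[RR]_m | simplex_set s a /\ supp a != s].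
Definition beta (k : nat) : RR := (k.+2)%:R^-1.
Definition Lmap {m k : nat} (e : 'I_k.+2 -> 'I_m) (a : 'rV[RR]_m) : 'rV[RR]_k.+1 :=
  \row_(j < k.+1) (a ord0 (e (widen_ord (leqnSn _) j)) - beta k).
Definition tau {m k : nat} (e : 'I_k.+2 -> 'I_m) (a : 'rV[RR]_m) : RR :=
  (k.+2)%:R * mu (Lmap e a).
Definition en {k : nat} (v : 'rV[RR]_k.+1) : RR := Num.sqrt (\sum_j v ord0 j ^+ 2).
Definition wmap {m k : nat} (e : 'I_k.+2 -> 'I_m) (a : 'rV[RR]_m) : 'rV[RR]_k.+1 :=
  (en (Lmap e a))^-1 *: Lmap e a.
Definition rho {m k : nat} (e : 'I_k.+2 -> 'I_m) (v : 'rV[RR]_k.+1) : 'rV[RR]_m :=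
  \row_(t < m) \sum_(i < k.+2 | e i == t) (beta k + beta k * uext v i / mu v).
Definition enum_of {m k : nat} (e : 'I_k.+2 -> 'I_m) (s : {set 'I_m}) : Prop :=
  injective e /\ (forall t, t \in s <-> exists i, e i = t).

Lemma beta_gt0 k : 0 < beta k.
Proof. by rewrite /beta invr_gt0 ltr0n. Qed.

Lemma beta_mul k : (k.+2)%:R * beta k = 1.
Proof. by rewrite /beta mulfV // pnatr_eq0. Qed.

Lemma pick_in m k (e : 'I_k.+2 -> 'I_m) (F : 'I_k.+2 -> RR) j :
  injective e -> \sum_(i < k.+2 | e i == e j) F i = F j.
Proof.
move=> inj; rewrite (eq_bigl (fun i => i == j)) ?big_pred1_eq // => i.
by rewrite inj_eq.
Qed.

Lemma pick_out m k (e : 'I_k.+2 -> 'I_m) s (F : 'I_k.+2 -> RR) t :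
  enum_of e s -> t \notin s -> \sum_(i < k.+2 | e i == t) F i = 0.
Proof.
move=> [inj es] ts; rewrite big_pred0 // => i; apply/eqP => eit.
by move/negP: ts; apply; apply/es; exists i.
Qed.

Lemma sum_reindex m k (e : 'I_k.+2 -> 'I_m) s (a : 'rV[RR]_m) :
  enum_of e s -> (forall t, t \notin s -> a ord0 t = 0) ->
  \sum_(t < m) a ord0 t = \sum_(i < k.+2) a ord0 (e i).
Proof.
move=> [inj es] hz.
rewrite [RHS](eq_bigr (fun i => \sum_(t < m | e i == t) a ord0 t)); last first.
  by move=> i _; rewrite (eq_bigl (fun t => t == e i)) ?big_pred1_eq // => t; rewrite eq_sym.
rewrite [RHS](exchange_big_dep xpredT) //=; apply: eq_bigr => t _.
case: (boolP (t \in s)) => ts.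
  have [j ejt] := (proj1 (es t) ts); rewrite -ejt.
  by rewrite (pick_in (fun=> a ord0 (e j))).
by rewrite (@pick_out _ _ e s (fun=> a ord0 t) t (conj inj es) ts) hz.
Qed.

Lemma supp_out m (a : 'rV[RR]_m) (s : {set 'I_m}) t : supp a \subset s -> t \notin s -> a ord0 t = 0.
Proof.
move=> /fintype.subsetP sub ts; apply/eqP; apply: contraNT ts => at0.
by apply: sub; rewrite inE.
Qed.

Lemma ord_split k (i : 'I_k.+2) :
  (exists j : 'I_k.+1, i = widen_ord (leqnSn _) j) \/ i = ord_max.
Proof.
case: (ltnP i k.+1) => h; first by left; exists (Ordinal h); apply: val_inj.
by right; apply: val_inj => /=; apply/eqP; rewrite eqn_leq h -ltnS ltn_ord.
Qed.

Lemma uext_L m k (e : 'I_k.+2 -> 'I_m) s a i :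
  enum_of e s -> simplex_set s a -> uext (Lmap e a) i = a ord0 (e i) - beta k.
Proof.
move=> es [a0 [a1 sub]].
have S1 : \sum_(i < k.+2) a ord0 (e i) = 1.
  by rewrite -(sum_reindex a es) // => t; apply: supp_out.
case: (ord_split i) => [[j ->]|->]; first by rewrite uext_widen mxE.
rewrite uext_max.
under eq_bigr do rewrite mxE.
rewrite sumrB sumr_const card_ord.
rewrite big_ord_recr /= in S1.
have hb := beta_mul k.
have -> : beta k *+ k.+1 = 1 - beta k.
  by rewrite -hb mulr_natl mulrS; lra.
lra.
Qed.


Lemma mu_le_beta m k (e : 'I_k.+2 -> 'I_m) s a :
  enum_of e s -> simplex_set s a -> mu (Lmap e a) <= beta k.
Proof.
move=> es sa; have [a0 _] := sa.
case: (mu_cases (Lmap e a)) => [->|[i ->]]; first exact: ltW (beta_gt0 k).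
rewrite (uext_L _ es sa); have := a0 (e i); lra.
Qed.

Lemma tau_bounds m k (e : 'I_k.+2 -> 'I_m) s a :
  enum_of e s -> simplex_set s a -> 0 <= tau e a /\ tau e a <= 1.
Proof.
move=> es sa; rewrite /tau; split; first by rewrite mulr_ge0 // mu_ge0.
have h := mu_le_beta es sa; have hb := beta_mul k.
have hk : 0 <= (k.+2)%:R :> RR by rewrite ler0n.
nra.
Qed.

Lemma tau_bdry m k (e : 'I_k.+2 -> 'I_m) s a :
  enum_of e s -> bdry s a -> tau e a = 1.
Proof.
move=> es [sa ns]; have [_ [_ sub]] := sa.
have : ~~ (s \subset supp a).
  by apply: contra ns => h; rewrite finset.eqEsubset sub h.
case/subsetPn => t ts tn.
have [j ejt] := (proj1 ((proj2 es) t) ts).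
have at0 : a ord0 t = 0 by apply/eqP; move: tn; rewrite inE negbK.
have h1 := mu_ge (Lmap e a) j.
rewrite (uext_L _ es sa) ejt at0 in h1.
have h2 := mu_le_beta es sa.
have hb := beta_mul k.
rewrite /tau; have -> : mu (Lmap e a) = beta k by lra.
exact: hb.
Qed.

Lemma mu0 k : mu (0 : 'rV[RR]_k.+1) = 0.
Proof. by rewrite -(scale0r (0 : 'rV[RR]_k.+1)) muZ // mul0r. Qed.

Lemma tau_pos m k (e : 'I_k.+2 -> 'I_m) a : 0 < tau e a -> Lmap e a != 0.
Proof.
move=> h; apply/negP => /eqP h0; move: h; rewrite /tau h0 mu0 mulr0 ltxx.
by [].
Qed.

Lemma sphere_norm k (v : 'rV[RR]_k.+1) : v != 0 -> unit_sphere k ((en v)^-1 *: v).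
Proof.
move=> v0; rewrite /unit_sphere /=.
set S := \sum_(j < k.+1) v ord0 j ^+ 2.
have S0 : 0 <= S by apply: sumr_ge0 => j _; exact: sqr_ge0.
have Sn0 : S != 0.
  apply/negP => /eqP Sz; move/negP: v0; apply; apply/eqP/rowP => j.
  have := psumr_eq0P (P := predT) (fun j _ => sqr_ge0 (v ord0 j)) Sz (i := j) isT.
  by move/eqP; rewrite sqrf_eq0 mxE => /eqP.
under eq_bigr do rewrite mxE exprMn.
rewrite -mulr_sumr -/S /en -/S exprVn sqr_sqrtr // mulVf //.
Qed.

Lemma sphere_neq0 k (v : 'rV[RR]_k.+1) : unit_sphere k v -> v != 0.
Proof.
move=> h; apply/negP => /eqP v0; move: h; rewrite /unit_sphere /= v0.
under eq_bigr do rewrite mxE expr0n /=.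
by rewrite big1 // => /esym/eqP; rewrite oner_eq0.
Qed.

Lemma rho_in m k (e : 'I_k.+2 -> 'I_m) (v : 'rV[RR]_k.+1) j :
  injective e -> rho e v ord0 (e j) = beta k + beta k * uext v j / mu v.
Proof. by move=> inj; rewrite mxE (pick_in (fun i => beta k + beta k * uext v i / mu v)). Qed.

Lemma rho_out m k (e : 'I_k.+2 -> 'I_m) s (v : 'rV[RR]_k.+1) t :
  enum_of e s -> t \notin s -> rho e v ord0 t = 0.
Proof. by move=> es ts; rewrite mxE (pick_out _ _ es ts). Qed.

Lemma rho_sphere m k (e : 'I_k.+2 -> 'I_m) s (v : 'rV[RR]_k.+1) :
  enum_of e s -> unit_sphere k v -> bdry s (rho e v).
Proof.
move=> es sv; have v0 := sphere_neq0 sv; have mpos := @mu_pos _ v v0.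
have [inj ens] := es.
have hb := beta_gt0 k.
have val : forall j, beta k + beta k * uext v j / mu v = beta k * (mu v + uext v j) / mu v.
  by move=> j; field; rewrite gt_eqF.
have outz : forall t, t \notin s -> rho e v ord0 t = 0 by move=> t; exact: rho_out.
have sub : supp (rho e v) \subset s.
  apply/fintype.subsetP => t; rewrite inE; apply: contraR => ts; rewrite outz //.
split; [split; [|split]|].
- move=> t; case: (boolP (t \in s)) => ts; last by rewrite outz.
  have [j <-] := proj1 (ens t) ts; rewrite rho_in // val.
  apply: divr_ge0; last exact: ltW.
  apply: mulr_ge0; first exact: ltW.
  by have := mu_ge v j; lra.
- rewrite (sum_reindex _ es outz).
  under eq_bigr do rewrite rho_in //.
  rewrite big_split /= sumr_const card_ord.
  under eq_bigr do rewrite mulrAC.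
  rewrite -mulr_sumr uext_sum mulr0 addr0.
  by rewrite -mulr_natl beta_mul.
- exact: sub.
- case: (mu_cases v) => [mz|[i mi]]; first by move: mpos; rewrite mz ltxx.
  apply/negP => /eqP hs.
  have : e i \in supp (rho e v) by rewrite hs; apply/ens; exists i.
  rewrite inE rho_in // mi.
  have ui : uext v i != 0 by apply/negP => /eqP ui; move: mpos; rewrite mi ui oppr0 ltxx.
  rewrite invrN mulrN mulfK // subrr eqxx.
  by [].
Qed.

Lemma rho_w m k (e : 'I_k.+2 -> 'I_m) s a :
  enum_of e s -> bdry s a -> rho e (wmap e a) = a.
Proof.
move=> es ba; have [inj ens] := es; have [sa ns] := ba.
have t1 := tau_bdry es ba.
have L0 : Lmap e a != 0 by apply: tau_pos; rewrite t1 ltr01.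
have hmu : mu (Lmap e a) = beta k.
  have := beta_mul k; move: t1; rewrite /tau => t1 hb.
  have hk : (k.+2)%:R != 0 :> RR by rewrite pnatr_eq0.
  by apply: (mulfI hk); rewrite t1 hb.
have enpos : 0 < en (Lmap e a).
  rewrite /en sqrtr_gt0 lt_def; apply/andP; split; last first.
    by apply: sumr_ge0 => j _; exact: sqr_ge0.
  apply/negP => /eqP Sz; move/negP: L0; apply; apply/eqP/rowP => j.
  have := psumr_eq0P (P := predT) (fun j _ => sqr_ge0 (Lmap e a ord0 j)) Sz (i := j) isT.
  by move/eqP; rewrite sqrf_eq0 [in RHS]mxE => /eqP.
have cpos : 0 < (en (Lmap e a))^-1 by rewrite invr_gt0.
apply/rowP => t; case: (boolP (t \in s)) => ts; last first.
  by rewrite (rho_out _ _ es ts) (supp_out _ (proj2 (proj2 sa)) ts).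
have [j <-] := proj1 (ens t) ts.
rewrite rho_in // /wmap uextZ muZ; last exact: ltW.
rewrite hmu (uext_L _ es sa).
have hb := beta_gt0 k.
field; rewrite ?gt_eqF //.
Qed.

Lemma coord_cont m (t : 'I_m) : continuous (fun a : 'rV[RR]_m => a ord0 t).
Proof. exact: (@coord_continuous RR 1 m ord0 t). Qed.

Lemma Lmap_cont m k (e : 'I_k.+2 -> 'I_m) : continuous (Lmap e).
Proof.
move=> x; apply: row_cont_at => j.
exact: (@cvgB RR RR^o _ _ _ (fun a : 'rV[RR]_m => a ord0 (e (widen_ord (leqnSn _) j)))
   (fun=> beta k) _ _ (coord_cont _ x) (cvg_cst _)).
Qed.

Lemma sumR_cont_at (T : topologicalType) n (F : 'I_n -> T -> RR) x :
  (forall i, {for x, continuous (F i)}) -> {for x, continuous (fun a => \sum_(i < n) F i a)}.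
Proof. by move=> h; exact: (@sum_cont_at T RR^o _ _ _ F x (fun i _ => h i)). Qed.

Lemma uext_cont k (i : 'I_k.+2) : continuous (fun v : 'rV[RR]_k.+1 => uext v i).
Proof.
rewrite /uext; case: (i < k.+1)%N; first exact: coord_cont.
move=> x; exact: (@cvgN RR RR^o _ _ _ _ _
  (@sumR_cont_at _ _ (fun j (v : 'rV[RR]_k.+1) => v ord0 j) x (fun j => coord_cont j x))).
Qed.

Lemma mu_cont k : continuous (@mu k).
Proof.
move=> x; apply: (@max_cont_at _ _ _ (fun i (v : 'rV[RR]_k.+1) => - uext v i)) => i.
exact: (@cvgN RR RR^o _ _ _ _ _ (uext_cont i x)).
Qed.

Lemma tau_cont m k (e : 'I_k.+2 -> 'I_m) : continuous (tau e).
Proof.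
move=> x; exact: (@cvgM RR _ _ _ (fun=> (k.+2)%:R) (fun a => mu (Lmap e a)) _ _
  (cvg_cst _) (continuous_comp (@Lmap_cont _ _ e x) (@mu_cont k (Lmap e x)))).
Qed.

Lemma sq_cont k (j : 'I_k.+1) : continuous (fun v : 'rV[RR]_k.+1 => v ord0 j ^+ 2).
Proof.
move=> y; exact: (@cvgM RR _ _ _ (fun v : 'rV[RR]_k.+1 => v ord0 j) (fun v => v ord0 j) _ _
  (coord_cont j y) (coord_cont j y)).
Qed.

Lemma en_cont k : continuous (@en k).
Proof.
move=> x; have h := (@sumR_cont_at _ _ (fun j (v : 'rV[RR]_k.+1) => v ord0 j ^+ 2) x (fun j => @sq_cont k j x)).
rewrite /en. apply: (continuous_comp h). exact: sqrt_continuous.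
Qed.

Lemma wmap_cont_at m k (e : 'I_k.+2 -> 'I_m) a :
  Lmap e a != 0 -> {for a, continuous (wmap e)}.
Proof.
move=> L0; have enpos : en (Lmap e a) != 0.
  rewrite /en; apply/negP => /eqP h.
  move: h => /eqP; rewrite sqrtr_eq0 => hle.
  have S0 : 0 <= \sum_(j < k.+1) Lmap e a ord0 j ^+ 2.
    by apply: sumr_ge0 => j _; exact: sqr_ge0.
  have Sz : \sum_(j < k.+1) Lmap e a ord0 j ^+ 2 = 0 by apply/eqP; rewrite eq_le hle S0.
  move/negP: L0; apply; apply/eqP/rowP => j.
  have := psumr_eq0P (P := predT) (fun j _ => sqr_ge0 (Lmap e a ord0 j)) Sz (i := j) isT.
  by move/eqP; rewrite sqrf_eq0 [in RHS]mxE => /eqP.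
apply: (@continuousZ _ _ _ (fun a => (en (Lmap e a))^-1) (Lmap e)); last exact: Lmap_cont.
apply: (@continuousV _ _ (fun a => en (Lmap e a))) => //.
exact: (continuous_comp (@Lmap_cont _ _ e a) (@en_cont k (Lmap e a))).
Qed.

Lemma rho_cont_at m k (e : 'I_k.+2 -> 'I_m) v :
  v != 0 -> {for v, continuous (rho e)}.
Proof.
move=> v0; have mpos := @mu_pos _ v v0.
apply: row_cont_at => t.
apply: (@sum_cont_at _ RR^o _ _ _ (fun i w => beta k + beta k * uext w i / mu w)) => i _.
exact: (@cvgD RR RR^o _ _ _ (fun=> beta k) (fun w => beta k * uext w i / mu w) _ _ (cvg_cst _)
   (@cvgM RR _ _ _ (fun w => beta k * uext w i) (fun w => (mu w)^-1) _ _
      (@cvgM RR _ _ _ (fun=> beta k) (fun w => uext w i) _ _ (cvg_cst _) (@uext_cont k i v))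
      (@cvgV RR _ _ _ (@mu k) _ (lt0r_neq0 mpos) (@mu_cont k v)))).
Qed.

Lemma pair_cont_at (T U V : topologicalType) (f : T -> U) (g : T -> V) x :
  {for x, continuous f} -> {for x, continuous g} ->
  {for x, continuous (fun a => (f a, g a))}.
Proof. by move=> cf cg; apply: cvg_pair. Qed.

Lemma sumrow_cont m : continuous (fun a : 'rV[RR]_m => \sum_(i < m) a ord0 i).
Proof.
move=> x; exact: (@sumR_cont_at _ _ (fun i (a : 'rV[RR]_m) => a ord0 i) x (fun i => @coord_cont m i x)).
Qed.

Lemma closed_simplex m (s : {set 'I_m}) : closed (simplex_set s).
Proof.
have -> : simplex_set s =
   ((\bigcap_(i in [set: 'I_m]) ((fun a : 'rV[RR]_m => a ord0 i) @^-1` [set x | 0 <= x]))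
   `&` (\bigcap_(i in [set i | i \notin s]) ((fun a : 'rV[RR]_m => a ord0 i) @^-1` [set x | x = 0])))
   `&` (fun a : 'rV[RR]_m => \sum_(i < m) a ord0 i) @^-1` [set x | x = 1].
  apply/seteqP; split.
    move=> a [a0 [a1 sub]]; split => //; split => i //= ins.
    exact: supp_out sub ins.
  move=> a [[h1 h2] a1]; split; first by move=> i; exact: h1.
  split => //; apply/fintype.subsetP => i; rewrite inE; apply: contraR => ins.
  by rewrite (h2 i ins) eqxx.
apply: closedI; last first.
  apply: closed_preimage; first exact: sumrow_cont.
  exact: closed_eq.
apply: closedI; apply: closed_bigI => i _; apply: closed_preimage;
  try exact: coord_cont.
  exact: closed_ge.
exact: closed_eq.
Qed.

Definition Ext_prop {Y : topologicalType} {m : nat} (s : {set 'I_m}) (A B : set Y) : Prop :=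
  forall g : 'rV[RR]_m -> Y, {within bdry s, continuous g} -> g @` bdry s `<=` A ->
  exists h : 'rV[RR]_m -> Y, {within simplex_set s, continuous h} /\
    h @` simplex_set s `<=` B /\ (forall a, bdry s a -> h a = g a).

Definition sphere_prop {Y : topologicalType} (k : nat) (A B : set Y) : Prop :=
  forall f : 'rV[RR]_k.+1 -> Y, {within unit_sphere k, continuous f} ->
  f @` unit_sphere k `<=` A -> nullhomotopic_in k B f.

Lemma sphere_v0 k : unit_sphere k (delta_mx 0 ord0 : 'rV[RR]_k.+1).
Proof.
rewrite /unit_sphere /= (bigD1 ord0) //= big1 => [|j jn].
  by rewrite !mxE eqxx expr1n addr0.
by rewrite !mxE eqxx /= (negbTE jn) expr0n.
Qed.

Lemma core (Y : topologicalType) m k (e : 'I_k.+2 -> 'I_m) (s : {set 'I_m}) (A B : set Y) :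
  enum_of e s -> sphere_prop k A B -> Ext_prop s A B.
Proof.
move=> es hyp g cg gA.
have crho : {within unit_sphere k, continuous (rho e)}.
  apply: continuous_in_subspaceT => v /set_mem sv.
  exact: rho_cont_at (sphere_neq0 sv).
have cf : {within unit_sphere k, continuous (g \o rho e)}.
  by apply: (within_comp crho _ cg) => v sv; exact: rho_sphere es sv.
have fA : (g \o rho e) @` unit_sphere k `<=` A.
  by move=> _ [v sv <-]; apply: gA; exists (rho e v) => //; exact: rho_sphere es sv.
have [H [c [cH [HB Hend]]]] := hyp _ cf fA.
have cB : B c.
  have [_ <-] := Hend _ (sphere_v0 k); apply: HB.
  by exists (1, delta_mx 0 ord0) => //; split; [rewrite /unit_interval /= ler01 lexx|exact: sphere_v0].
pose h a := if tau e a <= 2^-1 then c else H (2 * (1 - tau e a), wmap e a).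
have half : (0 : RR) < 2^-1 by rewrite invr_gt0 ltr0n.
have pin : forall a, simplex_set s a -> 2^-1 <= tau e a ->
    (unit_interval `*` unit_sphere k) (2 * (1 - tau e a), wmap e a).
  move=> a sa ha; have [t0 t1] := tau_bounds es sa; split.
    by rewrite /unit_interval /=; apply/andP; split; lra.
  apply: sphere_norm; apply: tau_pos; exact: lt_le_trans half ha.
exists h; split; [|split].
- pose S1 := simplex_set s `&` [set a | tau e a <= 2^-1].
  pose S2 := simplex_set s `&` [set a | 2^-1 <= tau e a].
  have cl1 : closed S1.
    apply: closedI; first exact: closed_simplex.
    exact: (@closed_preimage _ _ (tau e) [set x : RR | x <= 2^-1] (@tau_cont _ _ e) (@closed_le RR (2^-1))).
  have cl2 : closed S2.
    apply: closedI; first exact: closed_simplex.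
    exact: (@closed_preimage _ _ (tau e) [set x : RR | 2^-1 <= x] (@tau_cont _ _ e) (@closed_ge RR (2^-1))).
  have c1 : {within S1, continuous h}.
    apply: (within_eq (f := fun=> c)) => [a [_ ha]|]; first by rewrite /h ha.
    by apply: continuous_subspaceT; exact: cst_continuous.
  have c2 : {within S2, continuous h}.
    pose p a := (2 * (1 - tau e a), wmap e a).
    have cp : {within S2, continuous p}.
      apply: continuous_in_subspaceT => a /set_mem [sa ha].
      rewrite /p; apply: (@pair_cont_at _ RR _ (fun a => 2 * (1 - tau e a)) (wmap e) a).
        exact: (@cvgM RR _ _ _ (fun=> 2) (fun a => 1 - tau e a) _ _ (cvg_cst _)
          (@cvgB RR RR^o _ _ _ (fun=> 1) (tau e) _ _ (cvg_cst _) (@tau_cont m k e a))).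
      apply: wmap_cont_at; apply: tau_pos; exact: lt_le_trans half ha.
    apply: (within_eq (f := H \o p)) => [a [sa ha]|]; last first.
      by apply: (within_comp cp _ cH) => a [sa ha]; exact: pin.
    rewrite /h /p /=; case: ifP => // hle.
    have t12 : tau e a = 2^-1 by apply/eqP; rewrite eq_le hle ha.
    rewrite t12 (_ : 2 * (1 - 2^-1) = 1); last by field.
    by have [_ ->] := Hend (wmap e a) (proj2 (pin a sa ha)).
  apply: (continuous_subspaceW (B := S1 `|` S2)); last exact: withinU_continuous.
  move=> a sa; case: (leP (tau e a) 2^-1) => hle; [left|right]; split => //.
  exact: ltW.
- move=> _ [a sa <-]; rewrite /h; case: ifP => hle //.
  apply: HB; exists (2 * (1 - tau e a), wmap e a) => //.
  by apply: pin => //; apply: ltW; rewrite ltNge hle.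
- move=> a ba; have t1 := tau_bdry es ba.
  have nle : (1 <= (2^-1 : RR)) = false.
    apply/negP => hh; have : (2^-1 : RR) < 1 by rewrite invf_lt1 // ltr1n.
    by rewrite ltNge hh.
  rewrite /h t1 nle subrr mulr0.
  have L0 : Lmap e a != 0 by apply: tau_pos; rewrite t1 ltr01.
  have [-> _] := Hend (wmap e a) (sphere_norm _ L0).
  by rewrite /= (rho_w es ba).
Qed.

Lemma enum_exists m (s : {set 'I_m}) k : #|s| = k.+2 ->
  exists e : 'I_k.+2 -> 'I_m, enum_of e s.
Proof.
move=> hs; exists (fun i => enum_val (cast_ord (esym hs) i)); split.
  by move=> i j /enum_val_inj /cast_ord_inj.
move=> t; split => [ts|[i <-]]; last exact: enum_valP.
exists (cast_ord hs (enum_rank_in ts t)).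
by rewrite cast_ordK (enum_rankK_in ts ts).
Qed.

Lemma supp_nonempty m (a : 'rV[RR]_m) : \sum_(i < m) a ord0 i = 1 -> supp a != finset.set0.
Proof.
move=> a1; apply/negP => /eqP s0; move: a1; rewrite big1 => [|i _].
  by move/eqP; rewrite eq_sym oner_eq0.
have : i \notin supp a by rewrite s0 finset.in_set0.
by rewrite inE negbK => /eqP.
Qed.

Lemma bdry_vertex m (s : {set 'I_m}) a : #|s| = 1%N -> ~ bdry s a.
Proof.
move=> /eqP /cards1P [t ->] [[_ [a1 sub]] ns].
have /set0Pn [u uin] := supp_nonempty _ a1.
have ut : u = t by apply/set1P; apply: (fintype.subsetP sub).
move/negP: ns; apply; rewrite finset.eqEsubset sub /=.
by apply/fintype.subsetP => v /set1P ->; rewrite -ut.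
Qed.

Lemma ext_of_size (Y : topologicalType) m (s : {set 'I_m}) c (A B : set Y) :
  #|s| = c.+1 -> (c = 0%N -> B !=set0) ->
  (forall k, c = k.+1 -> sphere_prop k A B) -> Ext_prop s A B.
Proof.
case: c => [|k] hs hB hS.
  have [b0 Bb0] := hB erefl.
  move=> g cg gA; exists (fun=> b0); split; [|split].
  - by apply: continuous_subspaceT; exact: cst_continuous.
  - by move=> _ [a _ <-].
  - by move=> a ba; exfalso; exact: bdry_vertex hs ba.
have [e es] := enum_exists hs.
exact: core es (hS k erefl).
Qed.

Lemma real_cover m (K : {set {set 'I_m}}) : simplicial_complex K ->
  realization K = \bigcup_(t in [set t : {set 'I_m} | t \in K]) simplex_set t.
Proof.
move=> cK; apply/seteqP; split.
  move=> a [a0 [a1 aK]]; exists (supp a) => //; split => //; split => //.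
move=> a [t tK [a0 [a1 sub]]]; split => //; split => //.
exact: cK tK sub.
Qed.

Lemma closed_real m (K : {set {set 'I_m}}) : simplicial_complex K -> closed (realization K).
Proof.
move=> cK; rewrite real_cover //; apply: closed_bigcup; first exact: finite_finset.
move=> t _; exact: closed_simplex.
Qed.

Lemma bdry_in_L m (L : {set {set 'I_m}}) (s : {set 'I_m}) (a : 'rV[RR]_m) :
  (forall t : {set 'I_m}, t \proper s -> t \in L) -> bdry s a -> realization L a.
Proof.
move=> hp [[a0 [a1 sub]] ns]; split => //; split => //.
by apply: hp; rewrite finset.properEneq ns sub.
Qed.

Lemma real_add m (L : {set {set 'I_m}}) (s : {set 'I_m}) :
  (forall t : {set 'I_m}, t \proper s -> t \in L) ->
  realization (s |: L) = realization L `|` simplex_set s.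
Proof.
move=> hp; apply/seteqP; split.
  move=> a [a0 [a1]]; rewrite !inE => /orP [/eqP sa|aL].
    by right; split => //; split => //; rewrite /supp sa subxx.
  by left.
move=> a [[a0 [a1 aL]]|[a0 [a1 sub]]]; split => //; split => //; rewrite !inE.
  by rewrite aL orbT.
case: (boolP (supp a == s)) => // ns /=.
by apply: hp; rewrite finset.properEneq ns sub.
Qed.

Lemma layer (Y : topologicalType) m (K L : {set {set 'I_m}}) c (A B : set Y) :
  (forall s : {set 'I_m}, #|s| = c.+1 -> Ext_prop s A B) ->
  simplicial_complex L -> L \subset K ->
  (forall s, s \in K -> s \notin L ->
     #|s| = c.+1 /\ (forall t : {set 'I_m}, t \proper s -> t \in L)) ->
  forall g : 'rV[RR]_m -> Y, {within realization L, continuous g} ->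
  g @` realization L `<=` B ->
  (forall s, s \in K -> s \notin L -> g @` bdry s `<=` A) ->
  exists h : 'rV[RR]_m -> Y, {within realization K, continuous h} /\
    h @` realization K `<=` B /\ (forall a, realization L a -> h a = g a).
Proof.
move=> ext; move Nd: #|K :\: L| => N.
elim: N L Nd => [|N IH] L Nd cL LK hKL g cg gB gA.
  have KL : K = L.
    apply/eqP; rewrite finset.eqEsubset LK andbT -finset.setD_eq0.
    by rewrite (cards0_eq Nd).
  by rewrite KL; exists g.
have [s sKL] : exists s, s \in K :\: L by apply/set0Pn; rewrite -card_gt0 Nd.
move: (sKL); rewrite inE => /andP [snL sK].
have [hs hp] := hKL s sK snL.
have cgb : {within bdry s, continuous g}.
  apply: (continuous_subspaceW _ cg) => a ba; exact: bdry_in_L hp ba.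
have [e1 [ce1 [e1B e1g]]] := ext s hs g cgb (gA s sK snL).
pose g' a := if supp a == s then e1 a else g a.
have eqL : forall a, realization L a -> g a = g' a.
  move=> a [_ [_ aL]]; rewrite /g'; case: ifP => // /eqP sa.
  by exfalso; move/negP: snL; apply; rewrite -sa.
have eqS : forall a, simplex_set s a -> e1 a = g' a.
  move=> a sa; rewrite /g'; case: ifP => // ns; apply: e1g; split => //.
  by rewrite ns.
have cg' : {within realization (s |: L), continuous g'}.
  rewrite real_add //; apply: withinU_continuous.
  - exact: closed_real.
  - exact: closed_simplex.
  - exact: within_eq eqL cg.
  - exact: within_eq eqS ce1.
have g'B : g' @` realization (s |: L) `<=` B.
  rewrite real_add // => _ [a [aL|aS] <-].
    by rewrite -eqL //; apply: gB; exists a.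
  by rewrite -eqS //; apply: e1B; exists a.
have cL' : simplicial_complex (s |: L).
  move=> u t; rewrite !inE => /orP [/eqP ->|uL] tu.
    case: (boolP (t == s)) => //= ts.
    by apply: hp; rewrite finset.properEneq ts tu.
  by rewrite (cL u t uL tu) orbT.
have LK' : s |: L \subset K by rewrite finset.subUset finset.sub1set sK LK.
have Nd' : #|K :\: (s |: L)| = N.
  have -> : K :\: (s |: L) = (K :\: L) :\ s.
    by apply/setP => t; rewrite !inE; case: (t == s); case: (t \in L).
  by move: Nd; rewrite (cardsD1 s) sKL add1n => [[]].
have hKL' : forall s', s' \in K -> s' \notin s |: L ->
    #|s'| = c.+1 /\ (forall t : {set 'I_m}, t \proper s' -> t \in s |: L).
  move=> s' s'K; rewrite !inE negb_or => /andP [_ s'nL].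
  have [h1 h2] := hKL s' s'K s'nL; split => // t ts.
  by rewrite !inE h2 ?orbT.
have gA' : forall s', s' \in K -> s' \notin s |: L -> g' @` bdry s' `<=` A.
  move=> s' s'K; rewrite !inE negb_or => /andP [_ s'nL] _ [a ba <-].
  have aL := bdry_in_L (proj2 (hKL s' s'K s'nL)) ba.
  by rewrite -eqL //; apply: (gA s' s'K s'nL); exists a.
have [h [ch [hB hg]]] := IH (s |: L) Nd' cL' LK' hKL' g' cg' g'B gA'.
exists h; split => //; split => // a aL.
rewrite hg; first by rewrite -eqL.
by rewrite real_add //; left.
Qed.

Lemma real_union m (L K : {set {set 'I_m}}) :
  realization (L :|: K) = realization L `|` realization K.
Proof.
apply/seteqP; split.
  by move=> a [a0 [a1]]; rewrite inE => /orP [aL|aK]; [left|right].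
by move=> a [[a0 [a1 aL]]|[a0 [a1 aK]]]; split => //; split => //; rewrite inE ?aL ?aK ?orbT.
Qed.

Lemma real_sub m (L K : {set {set 'I_m}}) : L \subset K ->
  realization L `<=` realization K.
Proof. by move=> LK a [a0 [a1 aL]]; split => //; split => //; exact: (fintype.subsetP LK). Qed.

Lemma main_ind (X Y : topologicalType) n (F : X -> set Y) (x : X) (y : Y) :
  lower_n_continuous n F -> F x y ->
  forall c, (c <= n.+1)%N -> forall V : set Y, nbhs y V ->
  exists (W : set Y) (U : set X), nbhs y W /\ nbhs x U /\ W `<=` V /\
   forall x', U x' -> forall m (K L : {set {set 'I_m}}),
     simplicial_complex K -> (forall s, s \in K -> (#|s| <= c)%N) ->
     simplicial_complex L -> L \subset K ->
     forall g : 'rV[RR]_m -> Y, {within realization L, continuous g} ->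
     g @` realization L `<=` W `&` F x' ->
     exists h : 'rV[RR]_m -> Y, {within realization K, continuous h} /\
       h @` realization K `<=` V `&` F x' /\ (forall a, realization L a -> h a = g a).
Proof.
move=> hF Fxy; elim => [|c IH] hc V hV.
  exists V, setT; split => //; split; first exact: filterT.
  split => // x' _ m K L cK hK cL LK g cg gW.
  have r0 : realization K `<=` set0.
    move=> a [_ [a1 aK]].
    have := hK _ aK; rewrite leqn0 cards_eq0 => /eqP h0.
    by move/negP: (supp_nonempty _ a1); apply; apply/eqP.
  exists g; split.
    apply: (@continuous_subspaceW _ _ (realization K) set0 g r0).
    exact: continuous_subspace0.
  by split => // z [a ra _]; case: (r0 a ra).
have [W1 [U1 [hW1 [hU1 hlow]]]] := hF x y Fxy V hV.
have [W2 [U2 [hW2 [hU2 [W2sub hind]]]]] := IH (ltnW hc) (W1 `&` V) (filterI hW1 hV).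
exists W2, (U1 `&` U2); split => //; split; first exact: filterI.
split; first by move=> z /W2sub [].
move=> x' [U1x U2x] m K L cK hK cL LK g cg gW.
have [Vne hsph] := hlow x' U1x.
have ext : forall s : {set 'I_m}, #|s| = c.+1 -> Ext_prop s (W1 `&` F x') (V `&` F x').
  move=> s hs; apply: (ext_of_size hs) => [c0|k ck f cf fA]; first exact: Vne.
  apply: hsph => //; move: hc; rewrite ck; by [].
pose Kc := [set t in K | (#|t| <= c)%N].
have cKc : simplicial_complex Kc.
  move=> u t; rewrite !inE => /andP [uK uc] tu; rewrite (cK u t uK tu) /=.
  exact: leq_trans (subset_leq_card tu) uc.
have hKc : forall s, s \in Kc -> (#|s| <= c)%N by move=> s; rewrite inE => /andP [].
have cLc : simplicial_complex (L :&: Kc).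
  move=> u t; rewrite inE => /andP [uL uKc] tu.
  by rewrite inE (cL u t uL tu) (cKc u t uKc tu).
have LcKc : L :&: Kc \subset Kc by exact: subsetIr.
have sLc : realization (L :&: Kc) `<=` realization L by apply: real_sub; exact: subsetIl.
have cgc : {within realization (L :&: Kc), continuous g} by exact: continuous_subspaceW sLc cg.
have gWc : g @` realization (L :&: Kc) `<=` W2 `&` F x'.
  by move=> _ [a aL <-]; apply: gW; exists a => //; exact: sLc.
have [h1 [ch1 [h1B h1g]]] := hind x' U2x m Kc (L :&: Kc) cKc hKc cLc LcKc g cgc gWc.
pose g2 a := if supp a \in L then g a else h1 a.
have eqL : forall a, realization L a -> g a = g2 a.
  by move=> a [_ [_ aL]]; rewrite /g2 aL.
have eqK : forall a, realization Kc a -> h1 a = g2 a.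
  move=> a aK; rewrite /g2; case: ifP => // aL.
  apply: h1g; have [a0 [a1 aK']] := aK; split => //; split => //.
  by rewrite inE aL aK'.
have cg2 : {within realization (L :|: Kc), continuous g2}.
  rewrite real_union; apply: withinU_continuous.
  - exact: closed_real.
  - exact: closed_real.
  - exact: within_eq eqL cg.
  - exact: within_eq eqK ch1.
have g2W1 : forall a, realization (L :|: Kc) a -> (W1 `&` V `&` F x') (g2 a).
  rewrite real_union => a [aL|aK].
    rewrite -eqL //; have [w2 fx] := gW (g a) (ex_intro2 _ _ a aL erefl).
    by split => //; apply: W2sub.
  by rewrite -eqK //; apply: h1B; exists a.
have g2B : g2 @` realization (L :|: Kc) `<=` V `&` F x'.
  by move=> _ [a ra <-]; have [[_ v] f] := g2W1 a ra.
have cL2 : simplicial_complex (L :|: Kc).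
  move=> u t; rewrite inE => /orP [uL|uK] tu; rewrite inE.
    by rewrite (cL u t uL tu).
  by rewrite (cKc u t uK tu) orbT.
have L2K : L :|: Kc \subset K.
  rewrite finset.subUset LK /=; apply/fintype.subsetP => t; rewrite inE.
  by case/andP.
have hKL2 : forall s, s \in K -> s \notin L :|: Kc ->
     #|s| = c.+1 /\ (forall t : {set 'I_m}, t \proper s -> t \in L :|: Kc).
  move=> s sK; rewrite !inE negb_or sK /= => /andP [_ sc].
  have hs : #|s| = c.+1.
    by apply/eqP; rewrite eqn_leq hK //= ltnNge.
  split => // t ts; rewrite !inE (cK s t sK (proper_sub ts)) /=.
  by rewrite -ltnS -hs proper_card ?orbT.
have gA2 : forall s, s \in K -> s \notin L :|: Kc -> g2 @` bdry s `<=` W1 `&` F x'.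
  move=> s sK snL _ [a ba <-].
  have ra := bdry_in_L (proj2 (hKL2 s sK snL)) ba.
  by have [[w1 _] f] := g2W1 a ra.
have [h [ch [hB hg]]] := layer ext cL2 L2K hKL2 cg2 g2B gA2.
exists h; split => //; split => // a aL.
rewrite hg; first by rewrite -eqL.
by rewrite real_union; left.
Qed.

Unset Implicit Arguments.

Theorem mainTheorem3 (X Y : topologicalType) (n : nat) (F : X -> set Y) :
  lower_n_continuous n F -> lower_polyhedrally_n_continuous n F.
Proof.
move=> hF x y Fxy V hV.
have [W [U [hW [hU [_ H]]]]] := @main_ind X Y n F x y hF Fxy n.+1 (leqnn _) V hV.
exists W, U; split => //; split => // x' Ux' m K L cK dK cL LK g cg gW.
Qed.
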